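(* Let $n,m\in\mathbb{N}$, let $p>1$, let $E_0>E_D>0$, and define $E:[0,1]\to(0,\infty)$ by $E(\delta)=\left(\frac{1-\delta}{E_0}+\frac{\delta}{E_D}\right)^{-1}$. Let $\hat{\mathbf K}_1,\dots,\hat{\mathbf K}_n\in\mathbb{R}^{m\times m}$ be symmetric positive semidefinite matrices, let $\mathbf f\in\mathbb{R}^m$, and let $\tilde{\boldsymbol\rho}\in\mathbb{R}^n$ with $\tilde\rho_e>0$ for all $e$. For $\boldsymbol\delta\in[0,1]^n$ set $\mathbf K_e(\boldsymbol\rho,\boldsymbol\delta)=\tilde\rho_e^{\,p}E(\delta_e)\hat{\mathbf K}_e$ and $\mathbf K(\boldsymbol\rho,\boldsymbol\delta)=\sum_{e=1}^n\mathbf K_e(\boldsymbol\rho,\boldsymbol\delta)$, and assume that $\mathbf K(\boldsymbol\rho,\boldsymbol\delta)$ is positive definite for all $\boldsymbol\delta\in[0,1]^n$. For $\epsilon\ge 0$ define $$\mathcal J_\epsilon(\boldsymbol\rho,\boldsymbol\delta,\mathbf u)=2\mathbf f^\top\mathbf u-\sum_{e=1}^n\mathbf u^\top\mathbf K_e(\boldsymbol\rho,\boldsymbol\delta)\mathbf u-\frac{\epsilon}{2}\|\boldsymbol\delta\|^2 .$$ Then, for fixed $\boldsymbol\rho$, the function $(\boldsymbol\delta,\mathbf u)\mapsto\mathcal J_\epsilon(\boldsymbol\rho,\boldsymbol\delta,\mathbf u)$ on $[0,1]^n\times\mathbb{R}^m$ is concave if $\epsilon=0$ and strictly concave if $\e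psilon>0$.
   Context: This is a discretized linear-elasticity compliance setting: $\hat{\mathbf K}_e$ is the element stiffness matrix of finite element $e$ for a unit material tensor, $\tilde{\boldsymbol\rho}$ is the (filtered) pseudo-density of a topology $\boldsymbol\rho$ (the dependence of $\mathbf K_e$ on $\boldsymbol\rho$ is only through $\tilde{\boldsymbol\rho}$), $p$ is the SIMP penalty exponent, and $\delta_e\in[0,1]$ is a material degradation parameter interpolating inversely between Young's moduli $E_0$ and $E_D$. *)

(* Defs.v *)
From HB Require Import structures.
From mathcomp Require Import all_boot all_order all_algebra.
From mathcomp Require Import all_classical all_reals all_analysis.
Set Implicit Arguments. Unset Strict Implicit. Unset Printing Implicit Defensive.
Import Order.TTheory GRing.Theory Num.Theory.
Local Open Scope ring_scope.

Section Defs.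
Variable R : realType.

Definition Emod (E0 ED d : R) : R := ((1 - d) / E0 + d / ED)^-1.

Definition qform (m : nat) (A : 'M[R]_m) (u : 'cV[R]_m) : R := (u^T *m A *m u) 0 0.

Definition symmetric_mx (m : nat) (A : 'M[R]_m) : Prop := A^T = A.
Definition psd_mx (m : nat) (A : 'M[R]_m) : Prop := forall v : 'cV[R]_m, 0 <= qform A v.
Definition pd_mx (m : nat) (A : 'M[R]_m) : Prop :=
  forall v : 'cV[R]_m, v != 0 -> 0 < qform A v.

Definition in_box01 (n : nat) (d : 'cV[R]_n) : Prop := forall e, 0 <= d e 0 <= 1.

Definition Kelem (n m : nat) (p E0 ED : R) (Khat : 'I_n -> 'M[R]_m)
  (rt : 'I_n -> R) (d : 'cV[R]_n) (e : 'I_n) : 'M[R]_m :=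
  ((rt e `^ p) * Emod E0 ED (d e 0)) *: Khat e.

Definition Kglob (n m : nat) (p E0 ED : R) (Khat : 'I_n -> 'M[R]_m)
  (rt : 'I_n -> R) (d : 'cV[R]_n) : 'M[R]_m :=
  \sum_(e < n) Kelem p E0 ED Khat rt d e.

Definition sqnorm (n : nat) (d : 'cV[R]_n) : R := \sum_(e < n) d e 0 ^+ 2.

Definition Jeps (n m : nat) (p E0 ED eps : R) (Khat : 'I_n -> 'M[R]_m)
  (rt : 'I_n -> R) (f : 'cV[R]_m) (d : 'cV[R]_n) (u : 'cV[R]_m) : R :=
  2 * (f^T *m u) 0 0 - \sum_(e < n) qform (Kelem p E0 ED Khat rt d e) u
  - eps / 2 * sqnorm d.

Definition concave_box (n m : nat) (F : 'cV[R]_n -> 'cV[R]_m -> R) : Prop :=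
  forall (d1 d2 : 'cV[R]_n) (u1 u2 : 'cV[R]_m) (t : R),
    in_box01 d1 -> in_box01 d2 -> 0 <= t <= 1 ->
    t * F d1 u1 + (1 - t) * F d2 u2
      <= F (t *: d1 + (1 - t) *: d2) (t *: u1 + (1 - t) *: u2).

Definition strictly_concave_box (n m : nat) (F : 'cV[R]_n -> 'cV[R]_m -> R) : Prop :=
  forall (d1 d2 : 'cV[R]_n) (u1 u2 : 'cV[R]_m) (t : R),
    in_box01 d1 -> in_box01 d2 -> (d1, u1) != (d2, u2) -> 0 < t < 1 ->
    t * F d1 u1 + (1 - t) * F d2 u2
      < F (t *: d1 + (1 - t) *: d2) (t *: u1 + (1 - t) *: u2).
End Defs.

(* Main.v *)
Require Import Defs.
From HB Require Import structures.
From mathcomp Require Import all_boot all_order all_algebra.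
From mathcomp Require Import all_classical all_reals all_analysis.
From mathcomp Require Import ring lra.
Import Order.TTheory GRing.Theory Num.Theory.
Local Open Scope ring_scope.

Set Implicit Arguments. Unset Strict Implicit.
Section H.
Variable R : realType.
Definition bil (m : nat) (A : 'M[R]_m) (x y : 'cV[R]_m) : R := (x^T *m A *m y) 0 0.

Lemma qformZ m (k : R) (A : 'M[R]_m) u : qform (k *: A) u = k * qform A u.
Proof. by rewrite /qform -scalemxAr -scalemxAl mxE. Qed.

Lemma qform_sum m n (A : 'I_n -> 'M[R]_m) u :
  qform (\sum_e A e) u = \sum_e qform (A e) u.
Proof. by rewrite /qform mulmx_sumr mulmx_suml summxE. Qed.

Lemma qform_comb m (A : 'M[R]_m) (a b : R) x y :
  qform A (a *: x + b *: y) =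
  a ^+ 2 * qform A x + a * b * (bil A x y + bil A y x) + b ^+ 2 * qform A y.
Proof.
rewrite /qform /bil.
have -> : (a *: x + b *: y)^T = a *: x^T + b *: y^T by apply/matrixP => i j; rewrite !mxE.
rewrite !(mulmxDl, mulmxDr).
rewrite -?(scalemxAl, scalemxAr) !mxE.
ring.
Qed.

Lemma bil_sym m (A : 'M[R]_m) x y : A^T = A -> bil A y x = bil A x y.
Proof.
move=> HA; rewrite /bil.
transitivity ((y^T *m A *m x)^T 0 0); first by rewrite [RHS]mxE.
by rewrite !trmx_mul trmxK HA mulmxA.
Qed.

Lemma key (t a b X Y Z : R) : 0 <= t <= 1 -> 0 < a -> 0 < b ->
  0 <= b^+2*X - 2*a*b*Z + a^+2*Y ->
  (t*a + (1-t)*b)^-1 * (t^+2*X + 2*t*(1-t)*Z + (1-t)^+2*Y)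
   <= t*(a^-1*X) + (1-t)*(b^-1*Y).
Proof.
move=> /andP[t0 t1] a0 b0 H.
have S0 : 0 < t*a + (1-t)*b by nra.
have E : t*(a^-1*X) + (1-t)*(b^-1*Y) -
   (t*a + (1-t)*b)^-1 * (t^+2*X + 2*t*(1-t)*Z + (1-t)^+2*Y)
   = (t*(1-t)*(b^+2*X - 2*a*b*Z + a^+2*Y)) / (a*b*(t*a + (1-t)*b)).
  field.
by rewrite !gt_eqF.
have : 0 <= (t*(1-t)*(b^+2*X - 2*a*b*Z + a^+2*Y)) / (a*b*(t*a + (1-t)*b)).
  apply: divr_ge0; last by rewrite !mulr_ge0 ?ltW.
  by rewrite !mulr_ge0 // subr_ge0.
rewrite -E subr_ge0 //.
Qed.
Lemma eqle (x y : R) : x = y -> x <= y. Proof. by move->. Qed.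
Lemma tsq_ge0 (t x : R) : 0 <= t <= 1 -> 0 <= t * (1 - t) * x ^+ 2.
Proof. move=> /andP[t0 t1]; apply: mulr_ge0; [apply: mulr_ge0; lra | exact: sqr_ge0]. Qed.
End H.

Theorem theorem1 (R : realType) (n m : nat) (p E0 ED eps : R)
  (Khat : 'I_n -> 'M[R]_m) (f : 'cV[R]_m) (rt : 'I_n -> R) :
  1 < p -> 0 < ED -> ED < E0 ->
  (forall e, symmetric_mx (Khat e)) -> (forall e, psd_mx (Khat e)) ->
  (forall e, 0 < rt e) ->
  (forall d : 'cV[R]_n, in_box01 d -> pd_mx (Kglob p E0 ED Khat rt d)) ->
  0 <= eps ->
  (eps = 0 -> concave_box (Jeps p E0 ED eps Khat rt f)) /\
  (0 < eps -> strictly_concave_box (Jeps p E0 ED eps Khat rt f)).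
Proof.
move=> Hp HED HE0 Hsym Hpsd Hrt Hpd Heps.
have E0p : 0 < E0 by apply: lt_trans HE0.
pose s (x : R) := (1 - x) / E0 + x / ED.
have spos x : 0 <= x <= 1 -> 0 < s x.
  move=> /andP[x0 x1].
  have -> : s x = ((1 - x) * ED + x * E0) / (E0 * ED).
    by rewrite /s; field; rewrite !gt_eqF.
  apply: divr_gt0; last by rewrite mulr_gt0.
  have : 0 <= x * (E0 - ED) by rewrite mulr_ge0 // subr_ge0 ltW.
  nra.
have saff t x y : s (t * x + (1 - t) * y) = t * s x + (1 - t) * s y.
  by rewrite /s; field; rewrite !gt_eqF.
have cge0 e : 0 <= rt e `^ p by apply: powR_ge0.
pose Q d u e := qform (Kelem p E0 ED Khat rt d e) u.
have QE d u e : Q d u e = rt e `^ p * (s (d e 0))^-1 * qform (Khat e) u.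
  by rewrite /Q /Kelem qformZ.
have gap d1 d2 u1 u2 t e : in_box01 d1 -> in_box01 d2 -> 0 <= t <= 1 ->
    Q (t *: d1 + (1 - t) *: d2) (t *: u1 + (1 - t) *: u2) e <=
    t * Q d1 u1 e + (1 - t) * Q d2 u2 e.
  move=> H1 H2 Ht.
  rewrite !QE !mxE saff qform_comb (@bil_sym _ _ (Khat e) u1 u2 (Hsym e)).
  set a := s (d1 e 0); set b := s (d2 e 0).
  have a0 : 0 < a by apply: spos.
  have b0 : 0 < b by apply: spos.
  set X := qform (Khat e) u1; set Y := qform (Khat e) u2.
  set Z := bil (Khat e) u1 u2.
  have HP := Hpsd e (b *: u1 + (- a) *: u2).
  rewrite qform_comb (@bil_sym _ _ (Khat e) u1 u2 (Hsym e)) -/X -/Y -/Z in HP.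
  have HP' : 0 <= b^+2*X - 2*a*b*Z + a^+2*Y.
    apply: le_trans HP _; by apply: eqle; ring.
  have HK := key Ht a0 b0 HP'.
  have := ler_wpM2l (cge0 e) HK.
  set c := rt e `^ p.
  move=> HH.
  have -> : c * (t * a + (1 - t) * b)^-1 *
      (t ^+ 2 * X + t * (1 - t) * (Z + Z) + (1 - t) ^+ 2 * Y) =
      c * ((t * a + (1 - t) * b)^-1 *
      (t ^+ 2 * X + 2 * t * (1 - t) * Z + (1 - t) ^+ 2 * Y)) by ring.
  apply: le_trans HH _.
  by apply: eqle; ring.
pose Sm d u := \sum_e Q d u e.
have Sle d1 d2 u1 u2 t : in_box01 d1 -> in_box01 d2 -> 0 <= t <= 1 ->
    Sm (t *: d1 + (1 - t) *: d2) (t *: u1 + (1 - t) *: u2) <=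
    t * Sm d1 u1 + (1 - t) * Sm d2 u2.
  move=> H1 H2 Ht.
  rewrite /Sm !mulr_sumr -big_split /=; apply: ler_sum => e _; exact: gap.
have Slt d u1 u2 t : in_box01 d -> u1 != u2 -> 0 < t < 1 ->
    Sm (t *: d + (1 - t) *: d) (t *: u1 + (1 - t) *: u2) <
    t * Sm d u1 + (1 - t) * Sm d u2.
  move=> Hd Hu /andP[t0 t1].
  have E : t * Sm d u1 + (1 - t) * Sm d u2 -
      Sm (t *: d + (1 - t) *: d) (t *: u1 + (1 - t) *: u2) =
      t * (1 - t) * qform (Kglob p E0 ED Khat rt d) (u1 - u2).
    rewrite /Sm /Kglob qform_sum !mulr_sumr -big_split -sumrB /=.
    apply: eq_bigr => e _.
    rewrite !QE !mxE /Kelem qformZ.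
    have -> : t * d e 0 + (1 - t) * d e 0 = d e 0 by ring.
    have -> : u1 - u2 = 1 *: u1 + (-1) *: u2 by rewrite scale1r scaleN1r.
    have -> : Emod E0 ED (d e 0) = (s (d e 0))^-1 by [].
    rewrite !qform_comb; ring.
  have Hq := Hpd d Hd (u1 - u2) ltac:(by rewrite subr_eq0).
  have : 0 < t * (1 - t) * qform (Kglob p E0 ED Khat rt d) (u1 - u2).
    by rewrite !mulr_gt0 // subr_gt0.
  lra.
have Nlin (d1 d2 : 'cV[R]_n) t : t * sqnorm d1 + (1 - t) * sqnorm d2 -
    sqnorm (t *: d1 + (1 - t) *: d2) =
    \sum_e t * (1 - t) * (d1 e 0 - d2 e 0) ^+ 2.
  rewrite /sqnorm !mulr_sumr -big_split -sumrB /=; apply: eq_bigr => e _.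
  rewrite !mxE; ring.
have Flin u1 u2 t : (f^T *m (t *: u1 + (1 - t) *: u2)) 0 0 =
    t * (f^T *m u1) 0 0 + (1 - t) * (f^T *m u2) 0 0.
  by rewrite mulmxDr -!scalemxAr !mxE.
have JE d u : Jeps p E0 ED eps Khat rt f d u =
    2 * (f^T *m u) 0 0 - Sm d u - eps / 2 * sqnorm d by [].
split.
  move=> eps0 d1 d2 u1 u2 t H1 H2 Ht.
  rewrite !JE Flin.
  have HS := Sle d1 d2 u1 u2 t H1 H2 Ht.
  have HN := Nlin d1 d2 t.
  have : 0 <= \sum_e t * (1 - t) * (d1 e 0 - d2 e 0) ^+ 2.
    by apply: sumr_ge0 => e _; apply: tsq_ge0.
  rewrite eps0; lra.
move=> epsp d1 d2 u1 u2 t H1 H2 Hne Ht.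
have Ht' : 0 <= t <= 1 by case/andP: Ht => t0 t1; rewrite !ltW.
case/andP: (Ht) => t0 t1.
rewrite !JE Flin.
case: (pselect (exists e, d1 e 0 != d2 e 0)) => [[e He]|nE].
  have HS := Sle d1 d2 u1 u2 t H1 H2 Ht'.
  have HN := Nlin d1 d2 t.
  have HN' := congr1 (fun x => eps / 2 * x) HN; simpl in HN'.
  have : 0 < \sum_e t * (1 - t) * (d1 e 0 - d2 e 0) ^+ 2.
    rewrite (bigD1 e) //=.
    have : 0 < t * (1 - t) * (d1 e 0 - d2 e 0) ^+ 2.
      apply: mulr_gt0; first by apply: mulr_gt0; lra.
      by rewrite exprn_even_gt0 //= subr_eq0.
    have : 0 <= \sum_(i | i != e) t * (1 - t) * (d1 i 0 - d2 i 0) ^+ 2.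
      by apply: sumr_ge0 => i _; apply: tsq_ge0.
    lra.
  move=> HP.
  have : 0 < eps / 2 * \sum_e t * (1 - t) * (d1 e 0 - d2 e 0) ^+ 2.
    by rewrite mulr_gt0 // divr_gt0.
  lra.
have ed : d1 = d2.
  apply/matrixP => i j; rewrite (ord1 j); apply/eqP/negPn/negP => h.
  by apply: nE; exists i.
subst d2.
have Hu : u1 != u2 by apply: contraNneq Hne => ->.
have HS := Slt d1 u1 u2 t H1 Hu Ht.
have HN := Nlin d1 d1 t.
have HN' := congr1 (fun x => eps / 2 * x) HN; simpl in HN'.
have : 0 <= \sum_e t * (1 - t) * (d1 e 0 - d1 e 0) ^+ 2.
  by apply: sumr_ge0 => e _; apply: tsq_ge0.
move=> HP.
have : 0 <= eps / 2 * \sum_e t * (1 - t) * (d1 e 0 - d1 e 0) ^+ 2.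
  by rewrite mulr_ge0 // divr_ge0 // ltW.
lra.
Qed.
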